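(* Let $Z$ and $X$ be the third and first Pauli matrices on $\mathbb C^2$ and consider the assemblage, for $a,b,x,y\in\{0,1\}$, $$\sigma^{(\mathrm{GHZ})}_{a,b|x,y}=\frac18\left\{\mathbb 1+\frac{(-1)^b}{\sqrt2}\left[Z+x(-1)^{a+y}X\right]\right\}$$ (obtained from the state $(|000\rangle+|111\rangle)/\sqrt2$ when Bob measures in the eigenbasis of $Z+X$ for $y=0$ and of $Z-X$ for $y=1$, and Alice performs the trivial POVM $\{\mathbb 1/2,\mathbb 1/2\}$ for $x=0$ and an $X$-basis measurement for $x=1$). Then $\sigma^{(\mathrm{GHZ})}$ admits an LHS model across $AB|C$, and under the wiring $y=a$ it is mapped to the bipartite assemblage $$\sigma_{b|x}=\sum_a\sigma^{(\mathrm{GHZ})}_{a,b|x,a}=\frac14\left[\mathbb 1+\frac{(-1)^b}{\sqrt2}(Z+xX)\right],\qquad b,x\in\{0,1\},$$ which is both steerable and Bell nonlocal.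
   Context: A tripartite family $\{\sigma_{a,b|x,y}\}$ of positive semidefinite operators on $\mathbb C^2$ admits an LHS model across $AB|C$ if there exist a finite set of $\lambda$, probabilities $P_\lambda$, arbitrary conditional probability distributions $P_{a,b|x,y,\lambda}$ (not required to be non-signaling), and density operators $\varrho_\lambda$ with $\sigma_{a,b|x,y}=\sum_\lambda P_\lambda P_{a,b|x,y,\lambda}\varrho_\lambda$. A bipartite assemblage $\{\sigma_{b|x}\}$ is unsteerable if $\sigma_{b|x}=\sum_\lambda P_\lambda P_{b|x,\lambda}\varrho_\lambda$ for some finite hidden variable $\lambda$, probabilities $P_\lambda$, conditional distributions $P_{b|x,\lambda}$ and density operators $\varrho_\lambda$; otherwise it is steerable. It is Bell nonlocal if there exist POVMs $\{M_{c|z}\}_c$ on Charlie's system, for finitely many inputs $z$, such that the behavior $P(b,c|x,z)=\mathrm{Tr}[M_{c|z}\sigma_{b|x}]$ admits no local hidden-variable model $P(b,c|x,z)=\sum_\lambda P_\lambda P(b|x,\lambda)P(c|z,\lambda)$. *)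

(* Defs.v *)
From HB Require Import structures.
From mathcomp Require Import all_boot all_order all_algebra.
From mathcomp Require Import complex reals.
Set Implicit Arguments. Unset Strict Implicit. Unset Printing Implicit Defensive.
Import Order.TTheory GRing.Theory Num.Theory.
Local Open Scope ring_scope.

Section Defs.
Variable R : realType.
Local Notation C := R[i].

Definition rc (x : R) : C := (x%:C)%C.

Definition adj m n (A : 'M[C]_(m, n)) : 'M[C]_(n, m) := map_mx Num.conj A^T.

Definition psd (A : 'M[C]_2) : Prop :=
  A = adj A /\ forall v : 'cV[C]_2, 0 <= (adj v *m A *m v) 0 0.

Definition density (rho : 'M[C]_2) : Prop := psd rho /\ \tr rho = 1.

Definition pauliX : 'M[C]_2 := \matrix_(i, j) (if i == j then 0 else 1).
Definition pauliZ : 'M[C]_2 :=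
  \matrix_(i, j) (if i == j then (if i == ord0 then 1 else -1) else 0).

Definition prob_dist (T : finType) (P : T -> R) : Prop :=
  (forall t, 0 <= P t) /\ \sum_t P t = 1.

(* tripartite assemblage sigma a b x y, LHS model across AB|C:
   finitely many hidden variables lambda, arbitrary (possibly signaling)
   conditional distributions P(a,b|x,y,lambda). *)
Definition LHS_AB_C (A B X Y : finType) (sigma : A -> B -> X -> Y -> 'M[C]_2)
  : Prop :=
  exists (n : nat) (P : 'I_n -> R) (Pab : 'I_n -> X -> Y -> A * B -> R)
         (rho : 'I_n -> 'M[C]_2),
    prob_dist P /\
    (forall l x y, prob_dist (Pab l x y)) /\
    (forall l, density (rho l)) /\
    forall a b x y,
      sigma a b x y = \sum_(l < n) rc (P l * Pab l x y (a, b)) *: rho l.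

Definition unsteerable (B X : finType) (sigma : B -> X -> 'M[C]_2) : Prop :=
  exists (n : nat) (P : 'I_n -> R) (Pb : 'I_n -> X -> B -> R)
         (rho : 'I_n -> 'M[C]_2),
    prob_dist P /\
    (forall l x, prob_dist (Pb l x)) /\
    (forall l, density (rho l)) /\
    forall b x, sigma b x = \sum_(l < n) rc (P l * Pb l x b) *: rho l.

Definition steerable (B X : finType) (sigma : B -> X -> 'M[C]_2) : Prop :=
  ~ unsteerable sigma.

Definition LHV (B X Cc Z : finType) (P : B -> Cc -> X -> Z -> R) : Prop :=
  exists (n : nat) (Pl : 'I_n -> R) (Pb : 'I_n -> X -> B -> R)
         (Pc : 'I_n -> Z -> Cc -> R),
    prob_dist Pl /\
    (forall l x, prob_dist (Pb l x)) /\
    (forall l z, prob_dist (Pc l z)) /\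
    forall b c x z, P b c x z = \sum_(l < n) Pl l * Pb l x b * Pc l z c.

Definition POVM (Cc Z : finType) (M : Cc -> Z -> 'M[C]_2) : Prop :=
  (forall c z, psd (M c z)) /\ (forall z, \sum_c M c z = 1).

Definition bell_nonlocal (B X : finType) (sigma : B -> X -> 'M[C]_2) : Prop :=
  exists (k m : nat) (M : 'I_k -> 'I_m -> 'M[C]_2),
    POVM M /\
    forall P : B -> 'I_k -> X -> 'I_m -> R,
      (forall b c x z, rc (P b c x z) = \tr (M c z *m sigma b x)) ->
      ~ LHV P.

Definition sigmaGHZ (a b x y : 'I_2) : 'M[C]_2 :=
  rc (1 / 8) *: (1%:M + (rc ((-1) ^+ b / Num.sqrt 2)) *:
     (pauliZ + rc ((x : nat)%:R * (-1) ^+ (a + y)) *: pauliX)).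

Definition wired (b x : 'I_2) : 'M[C]_2 := \sum_(a < 2) sigmaGHZ a b x a.

End Defs.

(* Main.v *)
Require Import Defs.
From HB Require Import structures.
From mathcomp Require Import all_boot all_order all_algebra.
From mathcomp Require Import complex reals.
From mathcomp Require Import ring lra.
Import Order.TTheory GRing.Theory Num.Theory.
Local Open Scope ring_scope.

Section S.
Variable R : realType.
Local Notation C := R[i].

Definition Mb (t z x : R) : 'M[C]_2 :=
  \matrix_(i, j) rc (if i == j then (if i == ord0 then t + z else t - z) else x).

Lemma rcD (x y : R) : rc (x + y) = rc x + rc y. Proof. exact: rmorphD. Qed.
Lemma rcM (x y : R) : rc (x * y) = rc x * rc y. Proof. exact: rmorphM. Qed.
Lemma rcN (x : R) : rc (- x) = - rc x. Proof. exact: rmorphN. Qed.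
Lemma rc1 : rc (1 : R) = 1. Proof. exact: rmorph1. Qed.
Lemma rc0 : rc (0 : R) = 0. Proof. exact: rmorph0. Qed.
Lemma rcI (x y : R) : rc x = rc y -> x = y. Proof. by case. Qed.

Lemma Mb_ent (c d e : R) :
  rc c *: (1%:M + rc d *: (pauliZ R + rc e *: pauliX R)) = Mb c (c * d) (c * d * e).
Proof.
apply/matrixP => i j; rewrite !mxE.
case: i => [[|[|//]] ?]; case: j => [[|[|//]] ?] /=;
  rewrite ?rcD ?rcM ?rcN ?rc1 ?rc0; ring.
Qed.

Lemma sum_Mb n (t z x : 'I_n -> R) :
  \sum_(l < n) Mb (t l) (z l) (x l) = Mb (\sum_l t l) (\sum_l z l) (\sum_l x l).
Proof.
apply/matrixP => i j; rewrite summxE !mxE.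
under eq_bigr do rewrite mxE.
rewrite -rmorph_sum; congr rc.
case: (i == j); last by [].
case: (i == ord0); rewrite -?big_split ?sumrB //=.
Qed.

Lemma scale_Mb n (c t z x : 'I_n -> R) :
  \sum_(l < n) rc (c l) *: Mb (t l) (z l) (x l) =
  Mb (\sum_l c l * t l) (\sum_l c l * z l) (\sum_l c l * x l).
Proof.
rewrite -sum_Mb; apply: eq_bigr => l _.
apply/matrixP => i j; rewrite !mxE -rcM; congr rc.
case: (i == j); last by [].
by case: (i == ord0); ring.
Qed.


Lemma rc_real (x : R) : rc x \is Num.real.
Proof. by rewrite /rc complex_real. Qed.

Lemma conj_rc (x : R) : Num.conj (rc x) = rc x.
Proof. by rewrite conj_Creal // rc_real. Qed.

Lemma rc_ge0 (x : R) : (0 <= rc x) = (0 <= x).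
Proof. by rewrite /rc ler0c. Qed.

Lemma quad2 (A : 'M[C]_2) (v : 'cV[C]_2) :
  (adj v *m A *m v) 0 0 =
  Num.conj (v 0 0) * (A 0 0 * v 0 0 + A 0 1 * v 1 0) +
  Num.conj (v 1 0) * (A 1 0 * v 0 0 + A 1 1 * v 1 0).
Proof.
rewrite !mxE !big_ord_recl !big_ord0 /= !mxE !big_ord_recl !big_ord0 /= !mxE.
have -> : lift ord0 ord0 = 1 :> 'I_2 by apply/val_inj.
have -> : ord0 = 0 :> 'I_2 by apply/val_inj.
rewrite !addr0 /=. ring.
Qed.

Lemma psd_Mb (t z x : R) : 0 <= t -> z ^+ 2 + x ^+ 2 <= t ^+ 2 -> psd (Mb t z x).
Proof.
move=> t0 h; split.
  apply/matrixP => i j; rewrite !mxE conj_rc.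
  by case: i => [[|[|//]] ?]; case: j => [[|[|//]] ?].
move=> v; rewrite quad2 !mxE /=.
set a := v 0 0; set b := v 1 0.
have ha : 0 <= t + z by nra.
have hg : 0 <= t - z by nra.
have hd : 0 <= (t + z) * (t - z) - x ^+ 2.
  have -> : (t + z) * (t - z) - x ^+ 2 = t ^+ 2 - (z ^+ 2 + x ^+ 2) by ring.
  by rewrite subr_ge0.
have E : Num.conj a * (rc (t + z) * a + rc x * b) + Num.conj b * (rc x * a + rc (t - z) * b)
  = rc (t + z) * (a * Num.conj a) + rc x * (Num.conj a * b + Num.conj b * a) + rc (t - z) * (b * Num.conj b) by ring.
rewrite E.
have [E0|hpos] := eqVneq (t + z) 0.
  have x0 : x = 0.
    move: hd; rewrite E0 mul0r sub0r oppr_ge0 => hh.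
    by apply/eqP; rewrite -sqrf_eq0 eq_le hh sqr_ge0.
  rewrite E0 x0 rc0 !mul0r add0r.
  by rewrite !add0r; apply: mulr_ge0; [rewrite rc_ge0 | apply: mul_conjC_ge0].
have tp : 0 < t + z by rewrite lt_def hpos ha.
have key : rc (t + z) * (rc (t + z) * (a * Num.conj a) + rc x * (Num.conj a * b + Num.conj b * a) + rc (t - z) * (b * Num.conj b))
  = (rc (t + z) * a + rc x * b) * Num.conj (rc (t + z) * a + rc x * b)
    + rc ((t + z) * (t - z) - x ^+ 2) * (b * Num.conj b).
  rewrite !(rmorphD, rmorphM) /= !conj_rc !(rcD, rcM, rcN). ring.
have : 0 <= rc (t + z) * (rc (t + z) * (a * Num.conj a) + rc x * (Num.conj a * b + Num.conj b * a) + rc (t - z) * (b * Num.conj b)).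
  rewrite key; apply: addr_ge0; first exact: mul_conjC_ge0.
  by apply: mulr_ge0; [rewrite rc_ge0 | apply: mul_conjC_ge0].
by rewrite pmulr_rge0 // /rc ltcR.
Qed.

Lemma tr_Mb t z x : \tr (Mb t z x) = rc (t *+ 2).
Proof. rewrite /mxtrace !big_ord_recl big_ord0 /= !mxE /= addr0 -rcD; congr rc; ring. Qed.


Definition sgn (n : nat) : R := if odd n then -1 else 1.
Local Notation s2 := (Num.sqrt (2 : R)).

Lemma s2n0 : s2 != 0.
Proof. by rewrite sqrtr_eq0 -ltNge ltr0n. Qed.
Lemma s2sq : s2 ^+ 2 = 2.
Proof. by rewrite sqr_sqrtr // ler0n. Qed.
Lemma s2gt0 : 0 < s2.
Proof. by rewrite sqrtr_gt0 ltr0n. Qed.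

Lemma s2inv : s2^-1 = s2 / 2.
Proof. apply: (mulfI s2n0); rewrite mulrA -expr2 s2sq divff ?mulfV ?s2n0 //. by rewrite pnatr_eq0. Qed.

Lemma sgn_sq n : sgn n ^+ 2 = 1.
Proof. by rewrite /sgn; case: odd; rewrite ?expr1n ?sqrrN ?expr1n. Qed.

Definition rhoL (l : 'I_4) : 'M[C]_2 :=
  Mb (1 / 2) (sgn l / (2 * s2)) (sgn (l %/ 2) / (2 * s2)).

Lemma density_rhoL l : density (rhoL l).
Proof.
split.
  apply: psd_Mb; first by rewrite div1r invr_ge0 ler0n.
  rewrite !expr_div_n !exprMn s2sq !sgn_sq.
  by rewrite -mulrDl le_eqVlt; apply/orP; left; apply/eqP; field.
by rewrite tr_Mb -rc1; congr rc; rewrite mulr2n; field.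
Qed.

Definition PabL (l : 'I_4) (x y : 'I_2) (p : 'I_2 * 'I_2) : R :=
  if (x : nat) == 0%N then (if (p.2 : nat) == (l %% 2)%N then 1 / 2 else 0)
  else (if ((p.2 : nat) == (l %% 2)%N) && (((p.1 + y + p.2) %% 2)%N == (l %/ 2)%N) then 1 else 0).

Lemma part1 : LHS_AB_C (@sigmaGHZ R).
Proof.
exists 4%N, (fun _ => 1 / 4), PabL, rhoL.
split.
  split; first by move=> _; rewrite div1r invr_ge0 ler0n.
  rewrite !big_ord_recl big_ord0 /=; by field.
split.
  move=> l x y; split.
    by case=> a b; rewrite /PabL; case: ifP => _; case: ifP => _; rewrite ?div1r ?invr_ge0 ?ler0n ?ler01 ?lexx.
  rewrite -(pair_bigA _ (fun a b => PabL l x y (a, b))) /=.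
  rewrite !big_ord_recl !big_ord0 /PabL /=.
  case: l => [[|[|[|[|//]]]] ?]; case: x => [[|[|//]] ?]; case: y => [[|[|//]] ?] /=; by field.
split; first exact: density_rhoL.
move=> a b x y.
rewrite /sigmaGHZ Mb_ent /rhoL scale_Mb.
rewrite !big_ord_recl !big_ord0 /PabL /sgn /=.
have := s2n0.
case: a => [[|[|//]] ?]; case: b => [[|[|//]] ?];
case: x => [[|[|//]] ?]; case: y => [[|[|//]] ?] /= => h;
congr Mb; by field.
Qed.


Lemma part2 (b x : 'I_2) : wired R b x =
     rc (1 / 4) *: (1%:M + rc ((-1) ^+ b / Num.sqrt 2) *:
        (pauliZ R + rc (x : nat)%:R *: pauliX R)).
Proof.
rewrite /wired; under eq_bigr do rewrite /sigmaGHZ Mb_ent.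
rewrite sum_Mb Mb_ent !big_ord_recl !big_ord0 /=.
have := s2n0.
case: b => [[|[|//]] ?]; case: x => [[|[|//]] ?] /= => h; congr Mb; by field.
Qed.

Lemma wiredE (b x : 'I_2) : wired R b x =
  Mb (1 / 4) (1 / 4 * ((-1) ^+ b / s2)) (1 / 4 * ((-1) ^+ b / s2) * (x : nat)%:R).
Proof. by rewrite part2 Mb_ent. Qed.


Lemma sum2 (F : 'I_2 -> R) : \sum_i F i = F 0 + F 1.
Proof.
rewrite !big_ord_recl big_ord0 addr0.
by have -> : lift ord0 ord0 = 1 :> 'I_2 by apply/val_inj.
Qed.

Lemma tr2 (A : 'M[C]_2) : \tr A = A 0 0 + A 1 1.
Proof.
rewrite /mxtrace !big_ord_recl big_ord0 addr0.
have -> : lift ord0 ord0 = 1 :> 'I_2 by apply/val_inj.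
by have -> : ord0 = 0 :> 'I_2 by apply/val_inj.
Qed.

Local Notation ReC := (@complex.Re R).
Lemma ReD (z w : C) : ReC (z + w) = ReC z + ReC w.
Proof. by case: z => a b; case: w => c d; simpc. Qed.
Lemma Re_rcM (c : R) (z : C) : ReC (rc c * z) = c * ReC z.
Proof. by case: z => a b; rewrite /rc; simpc. Qed.

Lemma Re_sum_entry n (c : 'I_n -> R) (A : 'I_n -> 'M[C]_2) i j :
  ReC ((\sum_l rc (c l) *: A l) i j) = \sum_l c l * ReC (A l i j).
Proof.
rewrite summxE.
apply: (big_ind2 (fun z r => ReC z = r)) => //.
  by move=> z1 r1 z2 r2 <- <-; rewrite ReD.
by move=> l _; rewrite mxE Re_rcM.
Qed.

Definition lin (k00 k01 k10 k11 : R) (A : 'M[C]_2) : R :=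
  k00 * ReC (A 0 0) + k01 * ReC (A 0 1) + k10 * ReC (A 1 0) + k11 * ReC (A 1 1).

Lemma lin_sum k00 k01 k10 k11 n (c : 'I_n -> R) (A : 'I_n -> 'M[C]_2) :
  lin k00 k01 k10 k11 (\sum_l rc (c l) *: A l) = \sum_l c l * lin k00 k01 k10 k11 (A l).
Proof.
rewrite /lin !Re_sum_entry !mulr_sumr -!big_split /=.
by apply: eq_bigr => l _; ring.
Qed.

Lemma lin_Mb k00 k01 k10 k11 t z x :
  lin k00 k01 k10 k11 (Mb t z x) = k00 * (t + z) + (k01 + k10) * x + k11 * (t - z).
Proof. rewrite /lin !mxE /=. ring. Qed.

Lemma bloch (rho : 'M[C]_2) : density rho ->
  ReC (rho 0 0) + ReC (rho 1 1) = 1 /\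
  (ReC (rho 0 0) - ReC (rho 1 1)) ^+ 2 + (ReC (rho 0 1) + ReC (rho 1 0)) ^+ 2 <= 1.
Proof.
move=> [[_ hpsd] htr].
have Q : forall x y : R, 0 <= x * x * ReC (rho 0 0) + x * y * (ReC (rho 0 1) + ReC (rho 1 0))
                              + y * y * ReC (rho 1 1).
  move=> x y.
  have := hpsd (\matrix_(i, j) (if i == ord0 then rc x else rc y)).
  rewrite quad2 !mxE /= !conj_rc.
  have -> : rc x * (rho 0 0 * rc x + rho 0 1 * rc y) + rc y * (rho 1 0 * rc x + rho 1 1 * rc y)
     = rc (x * x) * rho 0 0 + rc (x * y) * (rho 0 1 + rho 1 0) + rc (y * y) * rho 1 1.
    rewrite !rcM; ring.
  by rewrite lecE => /andP [_]; rewrite !ReD !Re_rcM ReD.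
have T : ReC (rho 0 0) + ReC (rho 1 1) = 1.
  move: htr; rewrite tr2 => /(congr1 ReC); rewrite ReD; done.
split => //.
set p := ReC (rho 0 0) in Q T *; set q := ReC (rho 1 1) in Q T *.
set a := ReC (rho 0 1) + ReC (rho 1 0) in Q *.
have h1 := Q a (- (2 * p)). have h2 := Q q (- a / 2).
have hp := Q 1 0. have hq := Q 0 1.
nra.
Qed.


Lemma phi_bound (al al' be be' t u w : R) : 0 <= al -> 0 <= al' -> 0 <= be -> 0 <= be' ->
  al + al' = 1 -> be + be' = 1 -> t = 1 -> u ^+ 2 + w ^+ 2 <= 1 ->
  al * u - al' * u - 2 * (be * t - be * w) - 2 * (be' * t + be' * w) <= 1 / 4.
Proof.
move=> h1 h2 h3 h4 e1 e2 -> hu.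
have -> : al' = 1 - al by rewrite -e1; ring.
have -> : be' = 1 - be by rewrite -e2; ring.
set A := 2 * al - 1. set B := 2 * be - 1.
have hA : A ^+ 2 <= 1 by rewrite /A; nra.
have hB : B ^+ 2 <= 1 by rewrite /B; nra.
have -> : al * u - (1 - al) * u - 2 * (be * 1 - be * w) - 2 * ((1 - be) * 1 + (1 - be) * w)
   = (A * u + 2 * B * w) - 2 by rewrite /A /B; ring.
have hS : (A * u + 2 * B * w) ^+ 2 <= 5.
  have e : (A * u + 2 * B * w) ^+ 2 = (A ^+ 2 + 4 * B ^+ 2) * (u ^+ 2 + w ^+ 2) - (A * w - 2 * B * u) ^+ 2 by ring.
  rewrite e.
  have h5 : (A ^+ 2 + 4 * B ^+ 2) * (u ^+ 2 + w ^+ 2) <= 5.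
    have hu0 : 0 <= u ^+ 2 + w ^+ 2 by rewrite addr_ge0 ?sqr_ge0.
    have hab : 0 <= A ^+ 2 + 4 * B ^+ 2 by have := sqr_ge0 A; have := sqr_ge0 B; lra.
    nra.
  have := sqr_ge0 (A * w - 2 * B * u). lra.
set S := A * u + 2 * B * w in hS *.
nra.
Qed.

Definition F0 := lin (1 / s2) (-1 / s2) (-1 / s2) (-1 / s2).
Definition F1 := lin (1 / s2) (1 / s2) (1 / s2) (-1 / s2).
Definition FT := lin 1 0 0 1.

Lemma part3 : steerable (@wired R).
Proof.
move=> [n [P [Pb [rho [[HP0 HP1] [HPb [Hrho Hs]]]]]]].
pose V := F0 (wired R 0 0) - F0 (wired R 1 0) - 2 * (FT (wired R 0 1) - F1 (wired R 0 1))
          - 2 * (FT (wired R 1 1) + F1 (wired R 1 1)).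
have V1 : V = 1 / 2.
  rewrite /V /F0 /F1 /FT !wiredE !lin_Mb /=.
  have m12 : (1 %% 2 = 1)%N by [].
  rewrite !m12 expr0 expr1 s2inv.
  have := s2sq; lra.
pose Phi l := Pb l 0 0 * F0 (rho l) - Pb l 0 1 * F0 (rho l)
   - 2 * (Pb l 1 0 * FT (rho l) - Pb l 1 0 * F1 (rho l))
   - 2 * (Pb l 1 1 * FT (rho l) + Pb l 1 1 * F1 (rho l)).
have V2 : V = \sum_l P l * Phi l.
  rewrite [RHS](eq_bigr (fun l => P l * Pb l 0 0 * F0 (rho l) - P l * Pb l 0 1 * F0 (rho l)
     - 2 * (P l * Pb l 1 0 * FT (rho l) - P l * Pb l 1 0 * F1 (rho l))
     - 2 * (P l * Pb l 1 1 * FT (rho l) + P l * Pb l 1 1 * F1 (rho l)))); last first.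
    by move=> l _; rewrite /Phi; ring.
  rewrite !sumrB -!mulr_sumr !sumrB big_split /=.
  by rewrite /V !Hs /F0 /F1 /FT !lin_sum.
have V3 : \sum_l P l * Phi l <= 1 / 4.
  apply: (@le_trans _ _ (\sum_l P l * (1 / 4))).
    apply: ler_sum => l _; apply: ler_wpM2l; first exact: HP0.
    have [hb1 hb2] := bloch (rho l) (Hrho l).
    have [h0a h0b] := HPb l 0. have [h1a h1b] := HPb l 1.
    rewrite sum2 in h0b; rewrite sum2 in h1b.
    apply: phi_bound => //.
    - by rewrite /FT /lin; lra.
    - have -> : F0 (rho l) ^+ 2 + F1 (rho l) ^+ 2 =
         ((ReC (rho l 0 0) - ReC (rho l 1 1)) ^+ 2 + (ReC (rho l 0 1) + ReC (rho l 1 0)) ^+ 2)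
         * (s2 ^+ 2 / 2).
        by rewrite /F0 /F1 /lin s2inv; field.
      by rewrite s2sq divff ?mulr1 // pnatr_eq0.
  by rewrite -mulr_suml HP1 mul1r.
lra.
Qed.



Lemma Mb100 : Mb 1 0 0 = 1%:M.
Proof.
apply/matrixP => i j; rewrite !mxE.
case: i => [[|[|//]] ?]; case: j => [[|[|//]] ?] /=; rewrite ?addr0 ?subr0 //.
Qed.

Lemma mul2 (A B : 'M[C]_2) i j : (A *m B) i j = A i 0 * B 0 j + A i 1 * B 1 j.
Proof.
rewrite !mxE !big_ord_recl big_ord0 addr0.
have -> : lift ord0 ord0 = 1 :> 'I_2 by apply/val_inj.
by have -> : ord0 = 0 :> 'I_2 by apply/val_inj.
Qed.

Lemma tr_mul_Mb t z x t' z' x' :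
  \tr (Mb t z x *m Mb t' z' x') = rc (2 * (t * t' + z * z' + x * x')).
Proof.
rewrite tr2 !mul2 !mxE /= -!rcM -!rcD; congr rc; ring.
Qed.

Definition chshE (Q : 'I_2 -> 'I_2 -> 'I_2 -> 'I_2 -> R) : R :=
  let E x z := Q 0 0 x z - Q 0 1 x z - Q 1 0 x z + Q 1 1 x z in
  E 0 0 + E 0 1 + E 1 0 - E 1 1.

Lemma chsh_ext Q Q' : (forall b c x z, Q b c x z = Q' b c x z) -> chshE Q = chshE Q'.
Proof. by move=> H; rewrite /chshE !H. Qed.

Lemma chsh_sum n (F : 'I_n -> 'I_2 -> 'I_2 -> 'I_2 -> 'I_2 -> R) :
  chshE (fun b c x z => \sum_l F l b c x z) = \sum_l chshE (F l).
Proof. by rewrite /chshE /= !(sumrB, big_split). Qed.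

Lemma chsh_bound (a0 a1 b0 b1 : R) : -1 <= a0 <= 1 -> -1 <= a1 <= 1 ->
  -1 <= b0 <= 1 -> -1 <= b1 <= 1 -> a0 * b0 + a0 * b1 + a1 * b0 - a1 * b1 <= 2.
Proof.
move=> /andP[h1 h2] /andP[h3 h4] /andP[h5 h6] /andP[h7 h8].
have [e1|e1] := lerP 0 (b0 + b1); have [e2|e2] := lerP 0 (b0 - b1); nra.
Qed.

Definition Mc (c z : 'I_2) : 'M[C]_2 :=
  Mb (1 / 2) (if (z : nat) == 0%N then (-1) ^+ c / 2 else 0)
             (if (z : nat) == 0%N then 0 else - ((-1) ^+ c / 2)).

Lemma part4 : bell_nonlocal (@wired R).
Proof.
exists 2%N, 2%N, Mc; split.
  split.
    move=> c z; apply: psd_Mb; first by rewrite div1r invr_ge0 ler0n.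
    by case: c => [[|[|//]] ?]; case: z => [[|[|//]] ?] /=; rewrite ?expr0 ?expr1; lra.
  move=> z; apply: (@eq_trans _ _ (Mb 1 0 0)); last exact: Mb100.
  rewrite /Mc sum_Mb !sum2.
  by case: z => [[|[|//]] ?] /=; congr Mb; rewrite ?expr0 ?expr1; lra.
move=> P HP [n [Pl [Pb [Pc [[HPl0 HPl1] [HPb [HPc HL]]]]]]].
have Pval : forall b c x z, P b c x z =
   2 * (1 / 2 * (1 / 4) + (if (z : nat) == 0%N then (-1) ^+ c / 2 else 0) * (1 / 4 * ((-1) ^+ b / s2))
        + (if (z : nat) == 0%N then 0 else - ((-1) ^+ c / 2)) * (1 / 4 * ((-1) ^+ b / s2) * (x : nat)%:R)).
  by move=> b c x z; apply: rcI; rewrite HP wiredE /Mc tr_mul_Mb.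
have Sq : chshE P = 3 * s2 / 2.
  rewrite /chshE /= !Pval /=.
  have m12 : (1 %% 2 = 1)%N by [].
  rewrite !m12 /= expr0 expr1 s2inv.
  have := s2sq; lra.
have Sl : chshE P <= 2.
  rewrite (chsh_ext _ (fun b c x z => \sum_(l < n) Pl l * Pb l x b * Pc l z c) HL).
  rewrite (@chsh_sum n (fun l b c x z => Pl l * Pb l x b * Pc l z c)).
  apply: (@le_trans _ _ (\sum_l Pl l * 2)); last by rewrite -mulr_suml HPl1 mul1r.
  apply: ler_sum => l _.
  have [hb0 hb0s] := HPb l 0. have [hb1 hb1s] := HPb l 1.
  have [hc0 hc0s] := HPc l 0. have [hc1 hc1s] := HPc l 1.
  move: hb0s hb1s hc0s hc1s; rewrite !sum2 => hb0s hb1s hc0s hc1s.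
  have hA := chsh_bound (Pb l 0 0 - Pb l 0 1) (Pb l 1 0 - Pb l 1 1)
                        (Pc l 0 0 - Pc l 0 1) (Pc l 1 0 - Pc l 1 1).
  have e : chshE (fun b c x z => Pl l * Pb l x b * Pc l z c) =
    Pl l * ((Pb l 0 0 - Pb l 0 1) * (Pc l 0 0 - Pc l 0 1) + (Pb l 0 0 - Pb l 0 1) * (Pc l 1 0 - Pc l 1 1)
      + (Pb l 1 0 - Pb l 1 1) * (Pc l 0 0 - Pc l 0 1) - (Pb l 1 0 - Pb l 1 1) * (Pc l 1 0 - Pc l 1 1)).
    by rewrite /chshE /=; ring.
  rewrite e; apply: ler_wpM2l; first exact: HPl0.
  have := hb0 0; have := hb0 1; have := hb1 0; have := hb1 1.
  have := hc0 0; have := hc0 1; have := hc1 0; have := hc1 1.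
  move=> *; apply: hA; apply/andP; split; lra.
have := s2gt0; have := s2sq; nra.
Qed.

End S.

Theorem theorem2 (R : realType) :
  LHS_AB_C (@sigmaGHZ R) /\
  (forall b x : 'I_2, wired R b x =
     rc (1 / 4) *: (1%:M + rc ((-1) ^+ b / Num.sqrt 2) *:
        (pauliZ R + rc (x : nat)%:R *: pauliX R))) /\
  steerable (@wired R) /\
  bell_nonlocal (@wired R).
Proof.
split; first exact: part1.
split; first exact: part2.
split; first exact: part3.
exact: part4.
Qed.
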